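(* Let $f$ be the polynomial $$f(t)=\frac{2431}{80}t^9-\frac{1287}{20}t^7+\frac{18333}{400}t^5+\frac{343}{40}t^4-\frac{83}{10}t^3-\frac{213}{100}t^2+\frac{t}{10}-\frac{1}{200},$$ let $-t_0$ (with $t_0\approx 0.5907$) be the unique root of $f$ in $[-1,1/2]$, and let $\theta_0=\arccos t_0\approx 53.794^\circ$. Let $e_0\in\mathbf{S}^2$ and let $y_1,\dots,y_m\in\mathbf{S}^2$ satisfy $\mathrm{dist}(y_i,y_j)\ge60^\circ$ for all $i\ne j$ and $\mathrm{dist}(e_0,y_i)<\theta_0$ for all $i$. Then $m\le 4$.
   Context: $\mathrm{dist}$ denotes the angular (spherical) distance on the unit sphere $\mathbf{S}^2\subset\mathbb{R}^3$. *)

(* Defs.v *)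
From Stdlib Require Import Reals Lra.
Open Scope R_scope.

Definition vec3 : Type := (R * R * R)%type.

Definition dot3 (u v : vec3) : R :=
  let '(a1, a2, a3) := u in let '(b1, b2, b3) := v in a1*b1 + a2*b2 + a3*b3.

Definition on_S2 (u : vec3) : Prop := dot3 u u = 1.

Definition sdist (u v : vec3) : R := acos (dot3 u v).

Definition deg (x : R) : R := x * PI / 180.

Definition f_poly (t : R) : R :=
  2431/80 * t^9 - 1287/20 * t^7 + 18333/400 * t^5 + 343/40 * t^4
  - 83/10 * t^3 - 213/100 * t^2 + t/10 - 1/200.

(* Main.v *)
Require Import Defs.
From Stdlib Require Import Reals Lra Psatz Arith Lia.
Open Scope R_scope.

Definition PP (d : R) := (d - 1/4) * (d + 4/5) * (d + 4/5).
Definition c2 (x y : R) := x*x - y*y.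
Definition s2 (x y : R) := 2*x*y.
Definition c3 (x y : R) := x*x*x - 3*x*y*y.
Definition s3 (x y : R) := 3*x*x*y - y*y*y.
Definition QQ (x y x' y' : R) :=
  103/200 + 99/100 * (x*x' + y*y') + 27/40 * (c2 x y * c2 x' y' + s2 x y * s2 x' y')
  + 1/4 * (c3 x y * c3 x' y' + s3 x y * s3 x' y').

Lemma PP_QQ x y x' y' : x*x+y*y = 1 -> x'*x'+y'*y' = 1 ->
  PP (x*x'+y*y') = QQ x y x' y'.
Proof.
  intros H H'.
  set (d := x*x'+y*y').
  transitivity (1/4*(4*d*d*d - 3*d*((x*x+y*y)*(x'*x'+y'*y'))) + 27/40*(2*d*d - (x*x+y*y)*(x'*x'+y'*y')) + 99/100*d + 103/200).
  - rewrite H, H'. unfold PP. field.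
  - unfold QQ, c2, s2, c3, s3, d. field.
Qed.

Lemma PP_nonpos d : d <= 1/4 -> PP d <= 0.
Proof. intros. unfold PP.
  assert (0 <= (1/4 - d) * ((d+4/5)*(d+4/5))) by (apply Rmult_le_pos; [lra | apply Rle_0_sqr]).
  replace ((d - 1/4) * (d + 4/5) * (d + 4/5)) with (-((1/4 - d) * ((d+4/5)*(d+4/5)))) by ring.
  lra. Qed.

Lemma planar (x0 y0 x1 y1 x2 y2 x3 y3 x4 y4 : R) :
  x0*x0+y0*y0 = 1 -> x1*x1+y1*y1 = 1 -> x2*x2+y2*y2 = 1 ->
  x3*x3+y3*y3 = 1 -> x4*x4+y4*y4 = 1 ->
  x0*x1+y0*y1 <= 1/4 -> x0*x2+y0*y2 <= 1/4 -> x0*x3+y0*y3 <= 1/4 ->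
  x0*x4+y0*y4 <= 1/4 -> x1*x2+y1*y2 <= 1/4 -> x1*x3+y1*y3 <= 1/4 ->
  x1*x4+y1*y4 <= 1/4 -> x2*x3+y2*y3 <= 1/4 -> x2*x4+y2*y4 <= 1/4 ->
  x3*x4+y3*y4 <= 1/4 -> False.
Proof.
  intros U0 U1 U2 U3 U4 D01 D02 D03 D04 D12 D13 D14 D23 D24 D34.
  pose proof (PP_QQ _ _ _ _ U0 U0) as E00.
  pose proof (PP_QQ _ _ _ _ U1 U1) as E11.
  pose proof (PP_QQ _ _ _ _ U2 U2) as E22.
  pose proof (PP_QQ _ _ _ _ U3 U3) as E33.
  pose proof (PP_QQ _ _ _ _ U4 U4) as E44.
  rewrite U0 in E00. rewrite U1 in E11. rewrite U2 in E22. rewrite U3 in E33. rewrite U4 in E44.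
  pose proof (PP_QQ _ _ _ _ U0 U1) as E01.
  pose proof (PP_QQ _ _ _ _ U0 U2) as E02.
  pose proof (PP_QQ _ _ _ _ U0 U3) as E03.
  pose proof (PP_QQ _ _ _ _ U0 U4) as E04.
  pose proof (PP_QQ _ _ _ _ U1 U2) as E12.
  pose proof (PP_QQ _ _ _ _ U1 U3) as E13.
  pose proof (PP_QQ _ _ _ _ U1 U4) as E14.
  pose proof (PP_QQ _ _ _ _ U2 U3) as E23.
  pose proof (PP_QQ _ _ _ _ U2 U4) as E24.
  pose proof (PP_QQ _ _ _ _ U3 U4) as E34.
  apply PP_nonpos in D01. apply PP_nonpos in D02. apply PP_nonpos in D03.
  apply PP_nonpos in D04. apply PP_nonpos in D12. apply PP_nonpos in D13.
  apply PP_nonpos in D14. apply PP_nonpos in D23. apply PP_nonpos in D24.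
  apply PP_nonpos in D34.
  assert (KEY : QQ x0 y0 x0 y0 + QQ x1 y1 x1 y1 + QQ x2 y2 x2 y2 + QQ x3 y3 x3 y3 + QQ x4 y4 x4 y4
     + 2*(QQ x0 y0 x1 y1 + QQ x0 y0 x2 y2 + QQ x0 y0 x3 y3 + QQ x0 y0 x4 y4
        + QQ x1 y1 x2 y2 + QQ x1 y1 x3 y3 + QQ x1 y1 x4 y4 + QQ x2 y2 x3 y3
        + QQ x2 y2 x4 y4 + QQ x3 y3 x4 y4)
     = 25 * (103/200) + 99/100 * ((x0+x1+x2+x3+x4)^2 + (y0+y1+y2+y3+y4)^2)
       + 27/40 * ((c2 x0 y0 + c2 x1 y1 + c2 x2 y2 + c2 x3 y3 + c2 x4 y4)^2
                 + (s2 x0 y0 + s2 x1 y1 + s2 x2 y2 + s2 x3 y3 + s2 x4 y4)^2)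
       + 1/4 * ((c3 x0 y0 + c3 x1 y1 + c3 x2 y2 + c3 x3 y3 + c3 x4 y4)^2
                 + (s3 x0 y0 + s3 x1 y1 + s3 x2 y2 + s3 x3 y3 + s3 x4 y4)^2)).
  { unfold QQ. field. }
  assert (HP1 : PP 1 = 243/100) by (unfold PP; field).
  set (A := (x0+x1+x2+x3+x4)^2) in KEY. set (B := (y0+y1+y2+y3+y4)^2) in KEY.
  set (C := (c2 x0 y0 + c2 x1 y1 + c2 x2 y2 + c2 x3 y3 + c2 x4 y4)^2) in KEY.
  set (D := (s2 x0 y0 + s2 x1 y1 + s2 x2 y2 + s2 x3 y3 + s2 x4 y4)^2) in KEY.
  set (E := (c3 x0 y0 + c3 x1 y1 + c3 x2 y2 + c3 x3 y3 + c3 x4 y4)^2) in KEY.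
  set (F := (s3 x0 y0 + s3 x1 y1 + s3 x2 y2 + s3 x3 y3 + s3 x4 y4)^2) in KEY.
  assert (0 <= A) by (unfold A; apply pow2_ge_0). assert (0 <= B) by (unfold B; apply pow2_ge_0).
  assert (0 <= C) by (unfold C; apply pow2_ge_0). assert (0 <= D) by (unfold D; apply pow2_ge_0).
  assert (0 <= E) by (unfold E; apply pow2_ge_0). assert (0 <= F) by (unfold F; apply pow2_ge_0).
  lra.
Qed.

Definition vsub (u : vec3) (c : R) (v : vec3) : vec3 :=
  let '(a1, a2, a3) := u in let '(b1, b2, b3) := v in (a1 - c*b1, a2 - c*b2, a3 - c*b3).
Definition det3 (p e w : vec3) : R :=
  let '(a1, a2, a3) := p in let '(b1, b2, b3) := e in let '(c1, c2, c3) := w in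
  a1*(b2*c3-b3*c2) - a2*(b1*c3-b3*c1) + a3*(b1*c2-b2*c1).

Lemma dot_sym u v : dot3 u v = dot3 v u.
Proof. destruct u as [[? ?] ?], v as [[? ?] ?]; simpl; ring. Qed.

Lemma dot_vsub_l u c v x : dot3 (vsub u c v) x = dot3 u x - c * dot3 v x.
Proof. destruct u as [[? ?] ?], v as [[? ?] ?], x as [[? ?] ?]; simpl; ring. Qed.

Lemma dot_vsub_r u c v x : dot3 x (vsub u c v) = dot3 x u - c * dot3 x v.
Proof. rewrite dot_sym, dot_vsub_l, (dot_sym u), (dot_sym v). ring. Qed.

Lemma gram p q e w :
  det3 p e w * det3 q e w =
  dot3 p q * (dot3 e e * dot3 w w - dot3 e w * dot3 w e)
  - dot3 p e * (dot3 e q * dot3 w w - dot3 e w * dot3 w q)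
  + dot3 p w * (dot3 e q * dot3 w e - dot3 e e * dot3 w q).
Proof.
  destruct p as [[? ?] ?], q as [[? ?] ?], e as [[? ?] ?], w as [[? ?] ?]; simpl; ring.
Qed.

Lemma dot_self_nonneg u : 0 <= dot3 u u.
Proof. destruct u as [[a b] c]; simpl; nra. Qed.

Lemma dot_zero u v : dot3 u u = 0 -> dot3 u v = 0.
Proof.
  destruct u as [[a b] c], v as [[d e] f]; simpl; intro H.
  assert (a = 0) by nra. assert (b = 0) by nra. assert (c = 0) by nra. subst. ring.
Qed.

Lemma plane_coords (e p q w : vec3) (sp sq sw : R) :
  dot3 e e = 1 -> dot3 p e = 0 -> dot3 q e = 0 -> dot3 w e = 0 ->
  0 < sp -> 0 < sq -> 0 < sw -> dot3 w w = sw * sw ->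
  (dot3 p w / (sp*sw)) * (dot3 q w / (sq*sw)) + (det3 p e w / (sp*sw)) * (det3 q e w / (sq*sw))
  = dot3 p q / (sp*sq).
Proof.
  intros Hee Hpe Hqe Hwe Hsp Hsq Hsw Hww.
  assert (G := gram p q e w).
  rewrite (dot_sym e w), (dot_sym e q), Hee, Hwe, Hqe, Hpe, Hww, (dot_sym w q) in G.
  assert (E : dot3 p w * dot3 q w + det3 p e w * det3 q e w = dot3 p q * (sw*sw)).
  { rewrite G. ring. }
  transitivity ((dot3 p w * dot3 q w + det3 p e w * det3 q e w) / (sp*sq*(sw*sw))).
  { field. split; [|split]; lra. }
  rewrite E. field. split; lra.
Qed.

Definition zv (e y : vec3) := dot3 e y.
Definition wv (e y : vec3) := vsub y (zv e y) e.
Definition sv (e y : vec3) := sqrt (1 - zv e y * zv e y).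

Lemma wv_orth e y : dot3 e e = 1 -> dot3 (wv e y) e = 0.
Proof. intro H. unfold wv, zv. rewrite dot_vsub_l, H, dot_sym. ring. Qed.

Lemma wv_cross e y y' : dot3 e e = 1 ->
  dot3 (wv e y) (wv e y') = dot3 y y' - zv e y * zv e y'.
Proof.
  intro H. unfold wv. rewrite dot_vsub_l, !dot_vsub_r, H. unfold zv.
  rewrite (dot_sym y e). ring.
Qed.

Lemma z_bound e y : dot3 e e = 1 -> dot3 y y = 1 -> 0 <= 1 - zv e y * zv e y.
Proof.
  intros He Hy. pose proof (dot_self_nonneg (wv e y)) as N.
  rewrite wv_cross in N by auto. lra.
Qed.

Lemma sv_sq e y : dot3 e e = 1 -> dot3 y y = 1 -> sv e y * sv e y = 1 - zv e y * zv e y.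
Proof. intros. unfold sv. apply sqrt_sqrt. apply z_bound; auto. Qed.

Lemma poly_ineq a b : 59/100 <= a <= 1 -> 59/100 <= b <= 1 -> a*b <= 1/2 ->
  (2 - 4*a*b)*(2-4*a*b) <= (1-a*a)*(1-b*b).
Proof.
intros [Ha1 Ha2] [Hb1 Hb2] Hab.
assert (H1: 0 <= (a*a - (59/100)^2)*(b*b-(59/100)^2)) by (apply Rmult_le_pos; nra).
assert (H2: (59/100)^2 <= a*b) by nra.
assert (H3: 0 <= (a*b - (59/100)^2)*(1/2 - a*b)) by (apply Rmult_le_pos; lra).
nra.
Qed.

Lemma z_le1 e y : dot3 e e = 1 -> dot3 y y = 1 -> zv e y <= 1.
Proof. intros. pose proof (z_bound e y H H0). nra. Qed.

Lemma nondeg e yi yj t : dot3 e e = 1 -> dot3 yi yi = 1 -> dot3 yj yj = 1 ->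
  59/100 <= t -> t < zv e yi -> t < zv e yj -> dot3 yi yj <= 1/2 ->
  0 < 1 - zv e yi * zv e yi.
Proof.
  intros He Hi Hj Ht Hzi Hzj Hij.
  pose proof (z_bound e yi He Hi) as B.
  destruct (Rle_lt_or_eq_dec _ _ B) as [|E]; auto. exfalso.
  assert (W : dot3 (wv e yi) (wv e yi) = 0) by (rewrite wv_cross by auto; lra).
  pose proof (dot_zero _ (wv e yj) W) as W2.
  rewrite wv_cross in W2 by auto.
  assert (zv e yi = 1) by nra. nra.
Qed.

Lemma pair_le e yi yj t : dot3 e e = 1 -> dot3 yi yi = 1 -> dot3 yj yj = 1 ->
  59/100 <= t -> t < zv e yi -> t < zv e yj -> dot3 yi yj <= 1/2 ->
  0 < 1 - zv e yi * zv e yi -> 0 < 1 - zv e yj * zv e yj ->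
  dot3 (wv e yi) (wv e yj) / (sv e yi * sv e yj) <= 1/4.
Proof.
  intros He Hi Hj Ht Hzi Hzj Hij Ni Nj.
  pose proof (sv_sq e yi He Hi). pose proof (sv_sq e yj He Hj).
  assert (0 < sv e yi) by (unfold sv; apply sqrt_lt_R0; auto).
  assert (0 < sv e yj) by (unfold sv; apply sqrt_lt_R0; auto).
  pose proof (z_le1 e yi He Hi). pose proof (z_le1 e yj He Hj).
  rewrite wv_cross by auto.
  set (a := zv e yi) in *. set (b := zv e yj) in *.
  set (si := sv e yi) in *. set (sj := sv e yj) in *.
  assert (K : 2 - 4*a*b <= si*sj).
  { destruct (Rle_lt_dec (a*b) (1/2)) as [Hab|Hab].
    - pose proof (poly_ineq a b ltac:(lra) ltac:(lra) Hab) as P.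
      assert (0 < si*sj) by (apply Rmult_lt_0_compat; auto).
      assert ((2-4*a*b)*(2-4*a*b) <= (si*sj)*(si*sj)).
      { replace ((si*sj)*(si*sj)) with ((si*si)*(sj*sj)) by ring. rewrite H, H0. lra. }
      nra.
    - assert (0 < si*sj) by (apply Rmult_lt_0_compat; auto). lra. }
  apply Rmult_le_reg_r with (si*sj). apply Rmult_lt_0_compat; auto.
  unfold Rdiv. rewrite Rmult_assoc, Rinv_l. 2: { apply Rgt_not_eq, Rmult_lt_0_compat; auto. }
  lra.
Qed.

Definition PX (e r y : vec3) := dot3 (wv e y) (wv e r) / (sv e y * sv e r).
Definition PY (e r y : vec3) := det3 (wv e y) e (wv e r) / (sv e y * sv e r).

Lemma coord_pair e r yi yj : dot3 e e = 1 -> dot3 r r = 1 -> dot3 yi yi = 1 -> dot3 yj yj = 1 ->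
  0 < 1 - zv e r * zv e r -> 0 < 1 - zv e yi * zv e yi -> 0 < 1 - zv e yj * zv e yj ->
  PX e r yi * PX e r yj + PY e r yi * PY e r yj = dot3 (wv e yi) (wv e yj) / (sv e yi * sv e yj).
Proof.
  intros He Hr Hi Hj Nr Ni Nj. unfold PX, PY.
  apply plane_coords; try apply wv_orth; auto;
   try (unfold sv; apply sqrt_lt_R0; auto).
  rewrite sv_sq by auto. rewrite wv_cross by auto. lra.
Qed.

Lemma coord_unit e r yi : dot3 e e = 1 -> dot3 r r = 1 -> dot3 yi yi = 1 ->
  0 < 1 - zv e r * zv e r -> 0 < 1 - zv e yi * zv e yi ->
  PX e r yi * PX e r yi + PY e r yi * PY e r yi = 1.
Proof.
  intros He Hr Hi Nr Ni. rewrite coord_pair by auto.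
  rewrite wv_cross by auto. rewrite Hi. rewrite <- (sv_sq e yi) by auto.
  field. apply Rgt_not_eq. unfold sv. apply sqrt_lt_R0; auto.
Qed.

Lemma five (t : R) (e y0 y1 y2 y3 y4 : vec3) : 59/100 <= t ->
  dot3 e e = 1 -> dot3 y0 y0 = 1 -> dot3 y1 y1 = 1 -> dot3 y2 y2 = 1 ->
  dot3 y3 y3 = 1 -> dot3 y4 y4 = 1 ->
  t < zv e y0 -> t < zv e y1 -> t < zv e y2 -> t < zv e y3 -> t < zv e y4 ->
  dot3 y0 y1 <= 1/2 -> dot3 y0 y2 <= 1/2 -> dot3 y0 y3 <= 1/2 -> dot3 y0 y4 <= 1/2 ->
  dot3 y1 y2 <= 1/2 -> dot3 y1 y3 <= 1/2 -> dot3 y1 y4 <= 1/2 ->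
  dot3 y2 y3 <= 1/2 -> dot3 y2 y4 <= 1/2 -> dot3 y3 y4 <= 1/2 -> False.
Proof.
  intros Ht He U0 U1 U2 U3 U4 Z0 Z1 Z2 Z3 Z4 D01 D02 D03 D04 D12 D13 D14 D23 D24 D34.
  assert (N0 := nondeg e y0 y1 t He U0 U1 Ht Z0 Z1 D01).
  assert (N1 := nondeg e y1 y0 t He U1 U0 Ht Z1 Z0 ltac:(rewrite dot_sym; auto)).
  assert (N2 := nondeg e y2 y0 t He U2 U0 Ht Z2 Z0 ltac:(rewrite dot_sym; auto)).
  assert (N3 := nondeg e y3 y0 t He U3 U0 Ht Z3 Z0 ltac:(rewrite dot_sym; auto)).
  assert (N4 := nondeg e y4 y0 t He U4 U0 Ht Z4 Z0 ltac:(rewrite dot_sym; auto)).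
  apply (planar (PX e y0 y0) (PY e y0 y0) (PX e y0 y1) (PY e y0 y1) (PX e y0 y2) (PY e y0 y2)
                (PX e y0 y3) (PY e y0 y3) (PX e y0 y4) (PY e y0 y4));
    try (apply coord_unit; auto; fail);
    (rewrite coord_pair by auto; eapply pair_le; eauto).
Qed.

Lemma f_cont : continuity (fun s => - f_poly s).
Proof. unfold f_poly. reg. Qed.

Lemma t0_lb t0 : (forall s : R, -1 <= s <= 1/2 -> f_poly s = 0 -> s = - t0) -> 59/100 <= t0.
Proof.
  intro U.
  destruct (IVT (fun s => - f_poly s) (-1) (-59/100) f_cont) as [s [Hs Hf]].
  - lra.
  - unfold f_poly. lra.
  - unfold f_poly. lra.
  - assert (s = - t0) by (apply U; lra). lra.
Qed.

Lemma dot_unit_bound u v : dot3 u u = 1 -> dot3 v v = 1 -> -1 <= dot3 u v <= 1.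
Proof.
  destruct u as [[a b] c], v as [[d e] f]; simpl; intros.
  assert (0 <= (a-d)*(a-d) + (b-e)*(b-e) + (c-f)*(c-f)) by
    (repeat apply Rplus_le_le_0_compat; apply Rle_0_sqr).
  assert (0 <= (a+d)*(a+d) + (b+e)*(b+e) + (c+f)*(c+f)) by
    (repeat apply Rplus_le_le_0_compat; apply Rle_0_sqr).
  split; nra.
Qed.

Lemma sep_conv u v : dot3 u u = 1 -> dot3 v v = 1 -> deg 60 <= sdist u v -> dot3 u v <= 1/2.
Proof.
  intros Hu Hv H. unfold deg, sdist in H.
  replace (60 * PI / 180) with (PI/3) in H by field.
  pose proof (dot_unit_bound u v Hu Hv) as B.
  destruct (Rle_lt_dec (dot3 u v) (1/2)) as [|L]; auto. exfalso.
  pose proof (acos_bound (dot3 u v)).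
  destruct (Rle_lt_or_eq_dec _ _ H) as [H'|H'].
  - pose proof (cos_decreasing_1 (PI/3) (acos (dot3 u v))) as C.
    rewrite cos_acos, cos_PI3 in C by auto.
    assert (0 < PI) by apply PI_RGT_0.
    assert (dot3 u v < 1/2) by (apply C; lra). lra.
  - assert (HC : cos (PI/3) = cos (acos (dot3 u v))) by (rewrite H'; auto).
    rewrite cos_acos, cos_PI3 in HC by auto. lra.
Qed.

Lemma cap_conv z t : -1 <= z <= 1 -> -1 <= t <= 1 -> acos z < acos t -> t < z.
Proof.
  intros Hz Ht H.
  destruct (Rlt_le_dec t z) as [|L]; auto. exfalso.
  pose proof (acos_bound z). pose proof (acos_bound t).
  destruct (Rle_lt_or_eq_dec _ _ L) as [L'|L'].
  -
    pose proof (cos_decreasing_1 (acos z) (acos t)) as C.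
    rewrite !cos_acos in C by auto.
    assert (t < z) by (apply C; lra). lra.
  - subst. lra.
Qed.

Theorem mainTheorem5 (t0 : R)
  (Ht0_in : -1 <= - t0 <= 1/2)
  (Ht0_root : f_poly (- t0) = 0)
  (Ht0_unique : forall s : R, -1 <= s <= 1/2 -> f_poly s = 0 -> s = - t0)
  (e0 : vec3) (He0 : on_S2 e0)
  (m : nat) (y : nat -> vec3)
  (Hy : forall i : nat, (i < m)%nat -> on_S2 (y i))
  (Hsep : forall i j : nat, (i < m)%nat -> (j < m)%nat -> i <> j ->
            deg 60 <= sdist (y i) (y j))
  (Hcap : forall i : nat, (i < m)%nat -> sdist e0 (y i) < acos t0) :
  (m <= 4)%nat.
Proof.
  destruct (Nat.le_gt_cases m 4) as [|Hm]; auto. exfalso.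
  pose proof (t0_lb t0 Ht0_unique) as Ht.
  unfold on_S2 in *.
  assert (Z : forall i, (i < m)%nat -> t0 < zv e0 (y i)).
  { intros i Hi. unfold zv. apply cap_conv.
    - apply dot_unit_bound; auto.
    - lra.
    - apply Hcap; auto. }
  assert (S : forall i j, (i < m)%nat -> (j < m)%nat -> i <> j -> dot3 (y i) (y j) <= 1/2).
  { intros i j Hi Hj Hij. apply sep_conv; auto. }
  apply (five t0 e0 (y 0%nat) (y 1%nat) (y 2%nat) (y 3%nat) (y 4%nat)); auto;
    first [ apply Z; lia | apply S; lia | apply Hy; lia ].
Qed.
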